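(* Every free-connex conjunctive query without self-joins has the head-domination property.
   Context: A conjunctive query (CQ) without self-joins is $Q(\mathbf{A}) :- R_1(\mathbb{A}_1), \ldots, R_m(\mathbb{A}_m)$ with pairwise distinct relation symbols, $\mathrm{attr}(R_i)=\mathbb{A}_i$, $\mathrm{attr}(Q)=\bigcup_i\mathbb{A}_i$, output attributes $\mathrm{head}(Q)=\mathbf{A}$, $\mathrm{head}(R_i)=\mathrm{head}(Q)\cap\mathrm{attr}(R_i)$. $Q$ is acyclic if there is a tree whose nodes are in one-to-one correspondence with the relations of $Q$ such that for every attribute $A\in\mathrm{attr}(Q)$, the nodes whose relations contain $A$ form a connected subtree. $Q$ is free-connex if $Q$ is acyclic and the CQ obtained by adding to $Q$ one further relation whose attribute set is exactly $\mathrm{head}(Q)$ is also acyclic. $G^\exists_Q$ has as vertices the relations with $\mathrm{attr}(R_i)\setminus\mathrm{head}(Q)\neq\emptyset$ and an edge between $R_i,R_j$ if $(\mathrm{attr}(R_i)\cap\mathrm{attr}(R_j))\setminus\mathrm{head}(Q)\neq\emptyset$. A relation $R_i$ of $Q$ is dominant for a set $E$ of relations if $\bigcup_{R_j\in E}\mathrm{head}(R_j)\subseteq\mathrm{head}(R_i)$. $Q$ has the head-domination property if for every connected component $E$ of $G^\exists_Q$ some relation of $Q$ is dominant for $E$. *)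

(* Defs.v *)
From mathcomp Require Import all_boot.
Set Implicit Arguments. Unset Strict Implicit. Unset Printing Implicit Defensive.

(* A self-join-free CQ is given by a finite index type [I] of (pairwise
   distinct) relation symbols, a finite type [A] of attributes, the attribute
   set [att i] of each relation, and the set [head] of output attributes. *)

Definition is_tree (I : finType) (e : rel I) : Prop :=
  [/\ symmetric e, irreflexive e,
      (forall x y : I, connect e x y) &
      (forall s : seq I, uniq s -> 3 <= size s -> ~~ cycle e s)].

Definition induces_connected (I : finType) (e : rel I) (S : {set I}) : Prop :=
  forall x y, x \in S -> y \in S ->
    connect [rel u v | [&& e u v, u \in S & v \in S]] x y.

Definition acyclic (A I : finType) (att : I -> {set A}) : Prop :=
  exists e : rel I, is_tree e /\
    forall a : A, induces_connected e [set i | a \in att i].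

(* The query extended by one further relation (index [None]) whose attribute
   set is exactly head(Q). *)
Definition att_with_head (A I : finType) (att : I -> {set A}) (head : {set A})
  : option I -> {set A} :=
  fun o => if o is Some i then att i else head.

Definition free_connex (A I : finType) (att : I -> {set A}) (head : {set A})
  : Prop :=
  acyclic att /\ acyclic (att_with_head att head).

Definition headR (A I : finType) (att : I -> {set A}) (head : {set A}) (i : I)
  : {set A} := head :&: att i.

Definition gex_vertex (A I : finType) (att : I -> {set A}) (head : {set A})
  (i : I) : bool := att i :\: head != set0.

Definition gex_edge (A I : finType) (att : I -> {set A}) (head : {set A})
  : rel I :=
  fun i j => [&& gex_vertex att head i, gex_vertex att head j &
                 (att i :&: att j) :\: head != set0].

Definition gex_component (A I : finType) (att : I -> {set A}) (head : {set A})
  (i : I) : {set I} := [set j | connect (gex_edge att head) i j].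

Definition dominant (A I : finType) (att : I -> {set A}) (head : {set A})
  (k : I) (E : {set I}) : Prop :=
  \bigcup_(j in E) headR att head j \subset headR att head k.

Definition head_domination (A I : finType) (att : I -> {set A})
  (head : {set A}) : Prop :=
  forall i : I, gex_vertex att head i ->
    exists k : I, dominant att head k (gex_component att head i).

(* Main.v *)
Require Import Defs.
From mathcomp Require Import all_boot.
Set Implicit Arguments.

Section Aux.
Variable I : finType.
Variable e : rel (option I).
Definition eN : rel (option I) := [rel u v | [&& e u v, u != None & v != None]].

Lemma path_notNone x q : path eN x q -> forall y, y \in q -> y != None.
Proof.
elim: q x => [|z q IH] x //= /andP [/and3P [_ _ hz] hp] y.
rewrite in_cons => /orP [/eqP -> //|]; exact: IH hp y.
Qed.

Lemma uniq_nb : is_tree e -> forall k1 k2, k1 != None -> k2 != None ->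
  e k1 None -> e k2 None -> connect eN k1 k2 -> k1 = k2.
Proof.
case=> esym _ _ nocyc k1 k2 n1 n2 h1 h2 /connectP [p pp lp].
subst k2.
case: (eqVneq k1 (last k1 p)) => // neq; exfalso.
case: (shortenP pp) n2 h2 neq => p' pp' up' _ n2 h2 neq.
have nN : forall x, x \in k1 :: p' -> x != None.
  move=> x; rewrite in_cons => /orP [/eqP -> //|]; exact: path_notNone pp' x.
apply: (negP (nocyc (None :: k1 :: p') _ _)).
- rewrite cons_uniq up' andbT; apply/negP => /nN; by rewrite eqxx.
- case: p' pp' up' nN n2 h2 neq => [|z q] //= _ _ _ _ _.
    by rewrite eqxx.
- rewrite /cycle /= rcons_path esym h1 /= h2 andbT.
  apply: sub_path pp' => u v /and3P [] //.
Qed.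

Lemma reach_none (S : {set option I}) x q :
  x != None -> path [rel u v | [&& e u v, u \in S & v \in S]] x q ->
  last x q = None ->
  exists k, [/\ k != None, e k None, k \in S & connect eN x k].
Proof.
elim: q x => [|y q IH] x nx /=; first by move=> _ /eqP; rewrite (negbTE nx).
move=> /andP [/and3P [exy xS yS] hp] hl.
case: (eqVneq y None) => [yN|ny].
  exists x; split => //; rewrite ?connect0 -?yN //.
have [k [nk ek kS ck]] := IH y ny hp hl.
exists k; split => //; apply: connect_trans ck; apply: connect1.
by rewrite /eN /= exy nx ny.
Qed.
End Aux.
Arguments eN {I} e.
Arguments uniq_nb {I e}.
Arguments reach_none {I e S x q}.

Theorem lemma19 (A I : finType) (att : I -> {set A}) (head : {set A}) :
  head \subset \bigcup_(i : I) att i ->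
  free_connex att head -> head_domination att head.
Proof.
move=> _ [_ [e [tr ic]]] i vi.
set att' := att_with_head att head.
have c1 : forall j1 j2, gex_edge att head j1 j2 -> connect (eN e) (Some j1) (Some j2).
  move=> j1 j2 /and3P [_ _ /set0Pn [x]]; rewrite inE => /andP [xh]; rewrite inE => /andP [x1 x2].
  have := ic x (Some j1) (Some j2); rewrite !inE /= => /(_ x1 x2).
  apply: connect_sub => u v /= /and3P [euv]; rewrite !inE => xu xv.
  apply: connect1; rewrite /eN /= euv.
  case: u xu {euv} => [u|] /=; last by rewrite (negbTE xh).
  by case: v xv => [v|] /=; last by rewrite (negbTE xh).
have c1' : forall j, j \in gex_component att head i -> connect (eN e) (Some i) (Some j).
  move=> j; rewrite inE => /connectP [p pp ->] {j}.
  elim: p i pp {vi} => [|z q IH] x /=; first by move=> _; exact: connect0.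
  move=> /andP [exz hp]; apply: connect_trans (c1 _ _ exz) (IH _ hp).
have c2 : forall j a, a \in head -> a \in att j -> exists k, [/\ k != None, e k None,
     a \in att' k & connect (eN e) (Some j) k].
  move=> j a ah aj.
  have := ic a (Some j) None; rewrite !inE /= => /(_ aj ah) /connectP [p pp lp].
  have [k [nk ek kS ck]] := reach_none (x := Some j) isT pp (esym lp).
  by exists k; split => //; move: kS; rewrite inE.
have esymm : symmetric (eN e).
  case: tr => es _ _ _ u v; rewrite /eN /= es.
  by case: (e v u); case: (u != None); case: (v != None).
case: (boolP [exists j, exists a, (j \in gex_component att head i) && (a \in headR att head j)]).
- move=> /existsP [j0 /existsP [a0 /andP [j0E]]]; rewrite /headR inE => /andP [a0h a0j].
  have [k0 [nk0 ek0 a0k0 ck0]] := c2 j0 a0 a0h a0j.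
  case: k0 nk0 ek0 a0k0 ck0 => [k0|] // _ ek0 _ ck0.
  exists k0; apply/subsetP => a /bigcupP [j jE]; rewrite /headR inE => /andP [ah aj].
  have [k1 [nk1 ek1 ak1 ck1]] := c2 j a ah aj.
  have : Some k0 = k1.
    apply: (uniq_nb tr) => //.
    apply: connect_trans ck1.
    rewrite (sym_connect_sym esymm).
    apply: connect_trans ck0.
    rewrite (sym_connect_sym esymm).
    apply: connect_trans (c1' _ jE).
    rewrite (sym_connect_sym esymm); exact: c1'.
  move=> E; move: ak1; rewrite -E /att' /= => ak1; by rewrite /headR inE ah ak1.
- rewrite negb_exists => /forallP H.
  exists i; apply/subsetP => a /bigcupP [j jE aj].
  move: (H j); rewrite negb_exists => /forallP /(_ a); by rewrite jE aj.
Qed.
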